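(* Let $\mathbb{K}$ be a field, $S=\mathbb{K}[x_1,\ldots,x_{2m}]$, and let $H$ be a simple graph on $\{x_1,\ldots,x_m\}$. Let $I\subseteq S$ be a support-$2$ monomial ideal such that $G(I)$ is the whiskered graph $W_H$, i.e. $E(G(I))=E(H)\cup\{\{x_1,x_{m+1}\},\ldots,\{x_m,x_{2m}\}\}$. Assume that $I$ has no embedded associated primes, $G(I)$ is triangle-free, and $\alpha_{i,j}\le 1$ for all $1\le i,j\le 2m$. Then the following are equivalent: (1) $I^{(2)}=I^2$; (2) for each edge $\{x_i,x_j\}\in E(H)$, either ($w_{i,m+i}=w_{i,j}$ and $w_{j,m+j}=w_{j,i}$) or ($w_{i,m+i}\ge 2w_{i,j}$ and $w_{j,m+j}\ge 2w_{j,i}$).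
   Context: For a monomial ideal $I$, $\mathcal{G}(I)$ denotes its minimal set of monomial generators. $I$ is a support-$2$ monomial ideal if every element of $\mathcal{G}(I)$ has the form $x_i^ax_j^b$ with $i<j$ and $a,b\ge 1$. The underlying simple graph $G(I)$ has an edge $\{x_i,x_j\}$ whenever some element of $\mathcal{G}(I)$ has support $\{x_i,x_j\}$. $\alpha_{i,j}$ is the number of elements of $\mathcal{G}(I)$ with support exactly $\{x_i,x_j\}$ (so here each edge has exactly one such generator). For an edge $\{x_i,x_j\}$ of $G(I)$, $w_{i,j}$ denotes the exponent of $x_i$ in the unique element of $\mathcal{G}(I)$ with support $\{x_i,x_j\}$ (so that generator is $x_i^{w_{i,j}}x_j^{w_{j,i}}$). Symbolic power: $I^{(2)}=\bigcap_{P\in\mathrm{MinAss}(I)}(I^2S_P\cap S)$ over the minimal primes of $I$. *)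

(* Defs.v *)
From mathcomp Require Import all_boot all_order all_algebra.
From mathcomp Require Import mpoly.
Set Implicit Arguments.
Unset Strict Implicit.
Unset Printing Implicit Defensive.
Import GRing.Theory.
Local Open Scope ring_scope.

Section Ideals.
Variable R : comNzRingType.

Definition is_ideal (I : R -> Prop) : Prop :=
  [/\ I 0, (forall x y, I x -> I y -> I (x + y)) & (forall r x, I x -> I (r * x))].

Definition ideal_eq (I J : R -> Prop) : Prop := forall f, I f <-> J f.

Definition ideal_sub (I J : R -> Prop) : Prop := forall f, I f -> J f.

Definition ideal_gen (A : R -> Prop) : R -> Prop :=
  fun f => forall J, is_ideal J -> (forall a, A a -> J a) -> J f.

Definition ideal_mul (I J : R -> Prop) : R -> Prop :=
  ideal_gen (fun f => exists a b, [/\ I a, J b & f = a * b]).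

Definition is_prime_ideal (P : R -> Prop) : Prop :=
  [/\ is_ideal P, ~ P 1 & forall a b, P (a * b) -> P a \/ P b].

Definition is_ass_prime (I P : R -> Prop) : Prop :=
  is_prime_ideal P /\ exists f : R, forall g, P g <-> I (g * f).

Definition is_embedded_prime (I P : R -> Prop) : Prop :=
  is_ass_prime I P /\
  exists Q, [/\ is_ass_prime I Q, ideal_sub Q P & ~ ideal_sub P Q].

Definition no_embedded_primes (I : R -> Prop) : Prop :=
  forall P, ~ is_embedded_prime I P.

Definition is_min_prime (I P : R -> Prop) : Prop :=
  [/\ is_prime_ideal P, ideal_sub I P &
      forall Q, is_prime_ideal Q -> ideal_sub I Q -> ideal_sub Q P -> ideal_sub P Q].

(* the contraction J S_P ∩ S of the extension of J to the localization at P *)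
Definition loc_contr (J P : R -> Prop) : R -> Prop :=
  fun f => exists s, ~ P s /\ J (s * f).

Definition symb_sq (I : R -> Prop) : R -> Prop :=
  fun f => forall P, is_min_prime I P -> loc_contr (ideal_mul I I) P f.

End Ideals.

Section Monomial.
Variables (n : nat) (K : fieldType).
Implicit Types (I : {mpoly K[n]} -> Prop) (mm : 'X_{1..n}).

Definition is_monomial_ideal I : Prop :=
  is_ideal I /\
  ideal_eq I (ideal_gen (fun f => exists mm, f = 'X_[mm] /\ I f)).

(* mm is (the exponent of) an element of the minimal monomial generating set G(I):
   a monomial of I not properly divisible by any other monomial of I *)
Definition mingen I mm : Prop :=
  I 'X_[mm] /\ forall mm', I 'X_[mm'] -> lem mm' mm -> mm' = mm.

Definition msupp mm : {set 'I_n} := [set i | mm i != 0%N].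

Definition is_support2 I : Prop :=
  is_monomial_ideal I /\
  forall mm, mingen I mm -> exists u v : 'I_n, u != v /\ msupp mm = [set u; v].

Definition GI_edge I (u v : 'I_n) : Prop :=
  u != v /\ exists mm, mingen I mm /\ msupp mm = [set u; v].

Definition alpha_le1 I : Prop :=
  forall (u v : 'I_n) mm mm', mingen I mm -> mingen I mm' ->
    msupp mm = [set u; v] -> msupp mm' = [set u; v] -> mm = mm'.

Definition GI_triangle_free I : Prop :=
  forall u v w : 'I_n, ~ [/\ GI_edge I u v, GI_edge I v w & GI_edge I u w].

(* w_{u,v} = a and w_{v,u} = b : the generator with support {x_u, x_v}
   is x_u^a x_v^b *)
Definition w_is I (u v : 'I_n) (a b : nat) : Prop :=
  exists mm, [/\ mingen I mm, msupp mm = [set u; v], mm u = a & mm v = b].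

End Monomial.

(* H : simple graph on 'I_m (vertices x_1..x_m); variable x_i is lshift m i,
   its whisker x_{m+i} is rshift m i, in 'I_(m + m). *)
Definition is_simple_graph (m : nat) (H : rel 'I_m) : Prop :=
  ssrbool.symmetric H /\ ssrbool.irreflexive H.

Definition whisker_edge (m : nat) (H : rel 'I_m) (u v : 'I_(m + m)) : Prop :=
  (exists i j, [/\ u = lshift m i, v = lshift m j & H i j]) \/
  (exists i, (u = lshift m i /\ v = rshift m i) \/ (u = rshift m i /\ v = lshift m i)).

(* Main.v *)
Require Import Defs.
From mathcomp Require Import all_boot all_order all_algebra.
From mathcomp Require Import mpoly.
From mathcomp Require Import zify ring.
From Stdlib Require Import Classical ClassicalEpsilon.

Module PartA.
Set Implicit Arguments.
Unset Strict Implicit.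
Unset Printing Implicit Defensive.
Import GRing.Theory.
Local Open Scope ring_scope.

Section IdealBasics.
Variable R : comNzRingType.
Implicit Types (I J : R -> Prop).

Lemma ideal_gen_ideal (A : R -> Prop) : is_ideal (ideal_gen A).
Proof.
split.
- by move=> J [J0 _ _] _.
- move=> x y Hx Hy J HJ HA; case: (HJ) => _ Hadd _; apply: Hadd; [exact: Hx|exact: Hy].
- move=> r x Hx J HJ HA; case: (HJ) => _ _ Hmul; apply: Hmul; exact: Hx.
Qed.

Lemma ideal_gen_in (A : R -> Prop) a : A a -> ideal_gen A a.
Proof. by move=> Ha J _ HA; apply: HA. Qed.

Lemma ideal_sum I (T : Type) (r : seq T) (P : pred T) (F : T -> R) :
  is_ideal I -> (forall x, P x -> I (F x)) -> I (\sum_(x <- r | P x) F x).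
Proof.
move=> [I0 ID IM] HF; elim: r => [|x r IH]; first by rewrite big_nil.
rewrite big_cons; case: ifP => Px //; exact: ID (HF _ Px) IH.
Qed.

Lemma ideal_mulr I r x : is_ideal I -> I x -> I (x * r).
Proof. by move=> [_ _ IM] Hx; rewrite mulrC; apply: IM. Qed.

Lemma ideal_mul_in I J a b : I a -> J b -> ideal_mul I J (a * b).
Proof. by move=> Ha Hb; apply: ideal_gen_in; exists a, b. Qed.

Lemma ideal_mul_ideal I J : is_ideal (ideal_mul I J).
Proof. exact: ideal_gen_ideal. Qed.

Lemma prime_pow (P : R -> Prop) (x : R) k :
  is_prime_ideal P -> P (x ^+ k) -> (0 < k)%N -> P x.
Proof.
move=> [HI H1 Hp]; elim: k => [//|k IH] Hx _.
rewrite exprS in Hx; case: (Hp _ _ Hx) => // Hk.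
move: Hk IH; clear Hx; case: k => [|k] Hk IH; first by rewrite expr0 in Hk.
exact: IH.
Qed.

End IdealBasics.

End PartA.
Import PartA.

Module PartB.
Set Implicit Arguments.
Unset Strict Implicit.
Unset Printing Implicit Defensive.
Import GRing.Theory.
Local Open Scope ring_scope.

Definition asb (P : Prop) : bool :=
  if excluded_middle_informative P then true else false.
Lemma asbP (P : Prop) : reflect P (asb P).
Proof. by rewrite /asb; case: excluded_middle_informative => H; constructor. Qed.

Section Mono.
Variables (n : nat) (K : fieldType).
Local Notation MP := {mpoly K[n]}.
Local Notation XX := 'X_{1..n}.

Definition MI (M : XX -> Prop) (f : MP) := forall u, u \in msupp f -> M u.

Definition upward (M : XX -> Prop) := forall u w, M u -> M (u + w)%MM.

Lemma MI_ideal M : upward M -> is_ideal (MI M).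
Proof.
move=> HM; split.
- by move=> u; rewrite mcoeff_msupp mcoeff0 eqxx.
- move=> x y Hx Hy u /msuppD_le; rewrite mem_cat => /orP[/Hx|/Hy] //.
- move=> r x Hx u /msuppM_le /allpairsP [[t v] /= [_ Hv ->]].
  by rewrite addmC; apply: HM; apply: Hx.
Qed.

Lemma MI_X M u : M u -> MI M 'X_[u].
Proof. by move=> Hu v; rewrite msuppX inE => /eqP ->. Qed.

Lemma MI_sub M (J : MP -> Prop) : is_ideal J -> (forall u, M u -> J 'X_[u]) ->
  forall f, MI M f -> J f.
Proof.
move=> HJ HX f Hf; rewrite (mpolyE f) big_seq; apply: ideal_sum => // u Hu.
case: (HJ) => _ _ HM; rewrite -mul_mpolyC; apply: HM.
by apply: HX; apply: Hf.
Qed.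


Lemma mono_up (I : MP -> Prop) : is_ideal I -> upward (fun u => I 'X_[u]).
Proof. by move=> HI u w Hu; rewrite mpolyXD; apply: ideal_mulr. Qed.

Lemma monoE (I : MP -> Prop) : is_monomial_ideal I ->
  forall f, I f <-> MI (fun u => I 'X_[u]) f.
Proof.
move=> [HI Heq] f; split.
- move=> /Heq Hf; apply: Hf; first exact: MI_ideal (mono_up HI).
  by move=> a [mm [-> Hmm]]; apply: MI_X.
- by apply: MI_sub => // u.
Qed.

Lemma lem_mdeg_lt (a b : XX) : lem a b -> a != b -> (mdeg a < mdeg b)%N.
Proof.
move=> Hab Hne; rewrite -(submK Hab) mdegD -{1}[mdeg a]add0n ltn_add2r lt0n.
rewrite mdeg_eq0; apply: contra Hne => /eqP H0.
by rewrite -(submK Hab) H0 add0m.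
Qed.

Lemma mingen_exists (I : MP -> Prop) u : I 'X_[u] ->
  exists mm, mingen I mm /\ lem mm u.
Proof.
move Hd : (mdeg u) => d; elim: d {-2}d (leqnn d) u Hd => [|d IH] k Hk u Hd Hu.
- exists u; split; last exact: lepm_refl.
  split=> // mm' Hmm' Hle; apply/eqP; apply: contraT => Hne.
  by have := lem_mdeg_lt Hle Hne; rewrite Hd; move: Hk; case: (k).
- case: (classic (mingen I u)) => Hmin.
    by exists u; split=> //; exact: lepm_refl.
  have [mm' [Hmm' [Hle Hne]]] : exists mm', I 'X_[mm'] /\ lem mm' u /\ mm' != u.
    apply: NNPP => Hn; apply: Hmin; split=> // mm' H1 H2; apply/eqP.
    by apply: contraT => H3; case: Hn; exists mm'.
  have Hlt := lem_mdeg_lt Hle Hne.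
  have Hk' : (mdeg mm' <= d)%N by rewrite -ltnS (leq_trans Hlt) // Hd.
  have [mm [Hmm Hle2]] := IH (mdeg mm') Hk' mm' erefl Hmm'.
  by exists mm; split=> //; exact: lepm_trans Hle2 Hle.
Qed.

Definition M2 (I : MP -> Prop) (u : XX) :=
  exists p q, [/\ mingen I p, mingen I q & lem (p + q)%MM u].

Lemma M2_up I : upward (M2 I).
Proof.
move=> u w [p [q [Hp Hq Hl]]]; exists p, q; split=> //.
exact: lepm_trans Hl (lem_addr _ _).
Qed.

Lemma sqE (I : MP -> Prop) : is_monomial_ideal I ->
  forall f, ideal_mul I I f <-> MI (M2 I) f.
Proof.
move=> HmI f; have [HI _] := HmI; split.
- move=> Hf; apply: Hf; first exact: MI_ideal (@M2_up I).
  move=> x [a [b [Ha Hb ->]]] u /msuppM_le /allpairsP [[t v] /= [Ht Hv ->]].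
  have /(_ t Ht) := (monoE HmI a).1 Ha; move/mingen_exists => [p [Hp Hpt]].
  have /(_ v Hv) := (monoE HmI b).1 Hb; move/mingen_exists => [q [Hq Hqv]].
  exists p, q; split=> //; apply/mnm_lepP => i; rewrite !mnmDE.
  by apply: leq_add; [move/mnm_lepP: Hpt|move/mnm_lepP: Hqv].
- apply: MI_sub; first exact: ideal_mul_ideal.
  move=> u [p [q [[Hp _] [Hq _] Hl]]].
  rewrite -(submK Hl) addmC mpolyXD.
  apply: (ideal_mulr _ (@ideal_mul_ideal _ I I)).
  rewrite mpolyXD; exact: ideal_mul_in.
Qed.

End Mono.

End PartB.
Import PartB.

Module PartC.
Set Implicit Arguments.
Unset Strict Implicit.
Unset Printing Implicit Defensive.
Import GRing.Theory.
Local Open Scope ring_scope.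

Section Key.
Variables (n : nat) (K : fieldType).
Local Notation MP := {mpoly K[n]}.
Local Notation XX := 'X_{1..n}.

Definition mfilter (P : pred XX) (p : MP) : MP :=
  \sum_(m <- msupp p | P m) p@_m *: 'X_[m].

Lemma mcoeff_mfilter P p m : (mfilter P p)@_m = if P m then p@_m else 0.
Proof.
rewrite /mfilter raddf_sum /= big_mkcond /=.
under eq_bigr do rewrite mcoeffZ mcoeffX.
case: (boolP (m \in msupp p)) => Hm.
- rewrite (bigD1_seq m) //= ?msupp_uniq // eqxx mulr1 big1 ?addr0 //.
  by move=> i /negbTE Hi; rewrite Hi mulr0; case: ifP.
- rewrite big1_seq; first by rewrite (memN_msupp_eq0 Hm); case: ifP.
  move=> i /andP [_ Hi]; case: ifP => // _.
  by case: eqP => [E|]; [move: Hm; rewrite -E Hi|rewrite mulr0].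
Qed.

Lemma msupp_mfilter P p m : (m \in msupp (mfilter P p)) = P m && (m \in msupp p).
Proof. by rewrite !mcoeff_msupp mcoeff_mfilter; case: (P m); rewrite ?eqxx. Qed.

Variable C : pred 'I_n.
Definition cdeg (u : XX) := (\sum_(i | C i) u i)%N.
Lemma cdegD u w : cdeg (u + w)%MM = (cdeg u + cdeg w)%N.
Proof. by rewrite /cdeg -big_split /=; apply: eq_bigr => i _; rewrite mnmDE. Qed.
Lemma cdeg0P u : (cdeg u == 0)%N = [forall i, C i ==> (u i == 0)%N].
Proof.
rewrite /cdeg sum_nat_eq0; apply/forall_inP/forallP => H i.
  by apply/implyP => /H.
by move=> Ci; move: (H i); rewrite Ci.
Qed.

Lemma key (Good : XX -> Prop) (s f : MP) :
  upward Good ->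
  (forall t u, (cdeg t = 0)%N -> Good (t + u)%MM -> Good u) ->
  (exists t, t \in msupp s /\ cdeg t = 0%N) ->
  (exists u, u \in msupp f /\ ~ Good u) ->
  exists w, w \in msupp (s * f) /\ ~ Good w.
Proof.
move=> Hup HC [t0 [Ht0 Hct0]] [u0 [Hu0 Hbu0]].
pose bad u := ~~ asb (Good u).
have Hex : exists k, has (fun u => bad u && (cdeg u == k)) (msupp f).
  exists (cdeg u0); apply/hasP; exists u0 => //; rewrite eqxx andbT /bad.
  by apply/negP => /asbP.
case: (ex_minnP Hex) => k Hk Hmin.
pose f0 := mfilter (fun u => bad u && (cdeg u == k)) f.
pose s0 := mfilter (fun t => cdeg t == 0)%N s.
have nz_f0 : f0 != 0.
  move/hasP: Hk => [u Hu Hb]; apply/eqP => E.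
  by move: (msupp_mfilter (fun u => bad u && (cdeg u == k)) f u); rewrite -/f0 E Hb Hu
     mcoeff_msupp mcoeff0 eqxx.
have nz_s0 : s0 != 0.
  apply/eqP => E.
  by move: (msupp_mfilter (fun t => cdeg t == 0)%N s t0); rewrite -/s0 E Ht0 Hct0 eqxx
     mcoeff_msupp mcoeff0 eqxx.
set w := (mlead s0 + mlead f0)%MM.
have Hls := mlead_supp nz_s0; have Hlf := mlead_supp nz_f0.
rewrite msupp_mfilter in Hls; rewrite msupp_mfilter in Hlf.
case/andP: Hls => /eqP Hcs _; case/andP: Hlf => /andP [Hbf /eqP Hcf] _.
have Hcw : cdeg w = k by rewrite cdegD Hcs Hcf.
have Hbw : ~ Good w.
  move=> /(HC _ _ Hcs) Hg; by move: Hbf; rewrite /bad; case: asbP.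
exists w; split=> //.
have E : s * f = s0 * f0 + ((s - s0) * f0 + s * (f - f0)).
  by ring.
rewrite mcoeff_msupp E !mcoeffD.
have -> : ((s - s0) * f0)@_w = 0.
  apply: memN_msupp_eq0; apply/negP => /msuppM_le /allpairsP [[t u] /= [Ht Hu Hw]].
  rewrite msupp_mfilter in Hu; case/andP: Hu => /andP [_ /eqP Hcu] _.
  move: Ht; rewrite mcoeff_msupp mcoeffB mcoeff_mfilter.
  have : cdeg w = (cdeg t + cdeg u)%N by rewrite Hw cdegD.
  rewrite Hcw Hcu -{1}[k]add0n => /eqP; rewrite eqn_add2r => /eqP <-.
  by rewrite eqxx subrr eqxx.
have -> : (s * (f - f0))@_w = 0.
  apply: memN_msupp_eq0; apply/negP => /msuppM_le /allpairsP [[t u] /= [Ht Hu Hw]].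
  move: Hu; rewrite mcoeff_msupp mcoeffB mcoeff_mfilter.
  case: ifP => [_|Hnb]; first by rewrite subrr eqxx.
  rewrite subr0 => Hu; rewrite -mcoeff_msupp in Hu.
  case: (boolP (bad u)) => Hbu; last first.
    apply: Hbw; rewrite Hw addmC; apply: Hup; move: Hbu; rewrite /bad negbK.
    by move/asbP.
  rewrite Hbu /= in Hnb.
  have Hku : (k <= cdeg u)%N.
    apply: Hmin; apply/hasP; exists u => //; by rewrite Hbu eqxx.
  have : cdeg w = (cdeg t + cdeg u)%N by rewrite Hw cdegD.
  rewrite Hcw => Hk2.
  have : cdeg u = k by apply/eqP; rewrite eqn_leq Hku andbT Hk2 leq_addl.
  by move/eqP; rewrite Hnb.
rewrite !addr0 mleadcM mulf_neq0 // mleadc_eq0 //.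
Qed.

End Key.

End PartC.
Import PartC.

Module PartD.
Set Implicit Arguments.
Unset Strict Implicit.
Unset Printing Implicit Defensive.
Import GRing.Theory.
Local Open Scope ring_scope.

Section Primes.
Variables (n : nat) (K : fieldType).
Local Notation MP := {mpoly K[n]}.
Local Notation XX := 'X_{1..n}.

Definition PC (C : pred 'I_n) : MP -> Prop := MI (fun u => cdeg C u != 0%N).

Lemma PC_prime C : is_prime_ideal (PC C).
Proof.
have Hup : upward (fun u => cdeg C u != 0%N).
  by move=> u w; rewrite cdegD -!lt0n => /leq_trans; apply; rewrite leq_addr.
split; first exact: MI_ideal.
- move=> /(_ 0%MM); rewrite mcoeff_msupp mcoeff1 eqxx oner_neq0 => /(_ isT).
  by rewrite /cdeg big1 // => i _; rewrite mnm0E.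
- move=> a b Hab; apply: NNPP => Hn.
  have Ha : exists t, t \in msupp a /\ cdeg C t = 0%N.
    apply: NNPP => Hn2; apply: Hn; left => t Ht; apply/eqP => E; apply: Hn2.
    by exists t.
  have Hb : exists u, u \in msupp b /\ ~ (cdeg C u != 0%N).
    apply: NNPP => Hn2; apply: Hn; right => t Ht; apply: NNPP => E; apply: Hn2.
    by exists t.
  have HC : forall t u, cdeg C t = 0%N -> cdeg C (t + u)%MM != 0%N -> cdeg C u != 0%N.
    by move=> t u Ht; rewrite cdegD Ht.
  have [w [Hw Hbw]] := key (Good := fun u => cdeg C u != 0%N) Hup HC Ha Hb.
  by apply: Hbw; apply: Hab.
Qed.

Lemma PC_sub (C : pred 'I_n) (P : MP -> Prop) : is_ideal P ->
  (forall v, C v -> P 'X_v) -> ideal_sub (PC C) P.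
Proof.
move=> HP HC f; apply: MI_sub => // u Hu.
have [i Ci Hi] : exists2 i, C i & (0 < u i)%N.
  apply: NNPP => Hn; move: Hu; rewrite /cdeg big1 ?eqxx // => i Ci.
  by apply/eqP; rewrite -leqn0 leqNgt; apply/negP => H; apply: Hn; exists i.
have Hle : lem U_(i)%MM u by rewrite lep1mP -lt0n.
rewrite -(submK Hle) addmC mpolyXD; exact: ideal_mulr (HC _ Ci).
Qed.

Lemma prime_prod (P : MP -> Prop) (r : seq 'I_n) (F : 'I_n -> MP) :
  is_prime_ideal P -> P (\prod_(i <- r) F i) -> exists i, P (F i).
Proof.
move=> HP; elim: r => [|i r IH]; first by rewrite big_nil; case: HP.
rewrite big_cons => H; case: HP => _ _ Hp; case: (Hp _ _ H) => [H1|/IH //].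
by exists i.
Qed.

Lemma notP_X (P : MP -> Prop) (u : XX) : is_prime_ideal P ->
  (forall v, (0 < u v)%N -> ~ P 'X_v) -> ~ P 'X_[u].
Proof.
move=> HP Hu; rewrite mpolyXE_id => /(prime_prod HP) [i Hi].
case: (posnP (u i)) => Hui.
  by move: Hi; rewrite Hui expr0; case: HP.
by apply: (Hu i Hui); apply: (prime_pow HP Hi).
Qed.

Lemma M2_sq (I : MP -> Prop) p q u : is_ideal I -> mingen I p -> mingen I q ->
  lem (p + q)%MM u -> ideal_mul I I 'X_[u].
Proof.
move=> HI [Hp _] [Hq _] Hl.
rewrite -(submK Hl) addmC mpolyXD.
apply: (ideal_mulr _ (@ideal_mul_ideal _ I I)).
rewrite mpolyXD; exact: ideal_mul_in.
Qed.

Lemma loc_M2 (I P : MP -> Prop) (u : XX) p q : is_ideal I -> is_prime_ideal P ->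
  mingen I p -> mingen I q -> (forall v, P 'X_v -> (p v + q v <= u v)%N) ->
  loc_contr (ideal_mul I I) P 'X_[u].
Proof.
move=> HI HP Hp Hq Hv.
pose w : XX := [multinom (if asb (P 'X_v) then 0 else p v + q v)%N | v < n].
exists 'X_[w]; split.
  apply: notP_X => // v; rewrite mnmE; case: asbP => //.
rewrite -mpolyXD; apply: (M2_sq HI Hp Hq); apply/mnm_lepP => v.
rewrite !mnmDE mnmE; case: asbP => H.
  by rewrite add0n; apply: Hv.
exact: leq_addr.
Qed.

End Primes.

End PartD.
Import PartD.

Module PartE.
Set Implicit Arguments.
Unset Strict Implicit.
Unset Printing Implicit Defensive.
Import GRing.Theory.

Section Comb.
Variables (m : nat) (H : rel 'I_m) (gen : 'X_{1..m+m} -> Prop)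
  (h : 'I_m -> 'X_{1..m+m}) (g : 'I_m -> 'I_m -> 'X_{1..m+m}).
Local Notation L i := (lshift m i).
Local Notation R i := (rshift m i).

Hypothesis HHsym : ssrbool.symmetric H.
Hypothesis HHirr : irreflexive H.
Hypothesis Htri : forall i j k, H i j -> H i k -> H j k -> False.
Hypothesis Hh : forall i, gen (h i).
Hypothesis Hg : forall i j, H i j -> gen (g i j).
Hypothesis Hgsym : forall i j, H i j -> g i j = g j i.
Hypothesis Hgen : forall p, gen p -> (exists i, p = h i) \/ (exists i j, H i j /\ p = g i j).
Hypothesis Hh0 : forall i v, v != L i -> v != R i -> h i v = 0%N.
Hypothesis HhR : forall i, (0 < h i (R i))%N.
Hypothesis Hg0 : forall i j v, H i j -> v != L i -> v != L j -> g i j v = 0%N.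
Hypothesis Hcond : forall i j, H i j ->
  (g i j (L i) = h i (L i) /\ g i j (L j) = h j (L j)) \/
  (2 * g i j (L i) <= h i (L i) /\ 2 * g i j (L j) <= h j (L j))%N.

Lemma LL (i j : 'I_m) : (L i == L j) = (i == j). Proof. exact: (eq_shift.1.1.1 m m i j). Qed.
Lemma RR (i j : 'I_m) : (R i == R j) = (i == j). Proof. exact: (eq_shift.1.1.2 m m i j). Qed.
Lemma LR (i j : 'I_m) : (L i == R j) = false. Proof. exact: eq_lrshift. Qed.
Lemma RL (i j : 'I_m) : (R i == L j) = false. Proof. exact: eq_rlshift. Qed.

Lemma vsplit (v : 'I_(m+m)) : (exists i, v = L i) \/ (exists i, v = R i).
Proof.
case: (splitP v) => [j Hj|k Hk]; [left; exists j|right; exists k]; exact: val_inj.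
Qed.

Lemma gij_le i j : H i j -> (g i j (L i) <= h i (L i))%N.
Proof. by move=> Hij; case: (Hcond Hij) => [[-> _]|[H1 _]] //; lia. Qed.

Lemma h_pos_L i k : (0 < h k (L i))%N -> k = i.
Proof.
move=> Hp; apply/eqP; apply: contraT => Hne.
by move: Hp; rewrite Hh0 // ?LR // LL eq_sym.
Qed.

Lemma h_pos_R i k : (0 < h k (R i))%N -> k = i.
Proof.
move=> Hp; apply/eqP; apply: contraT => Hne.
by move: Hp; rewrite Hh0 // ?RL // RR eq_sym.
Qed.

Lemma g_pos_L i k l : H k l -> (0 < g k l (L i))%N -> i = k \/ i = l.
Proof.
move=> Hkl Hp; case: (eqVneq i k) => [->|Hik]; first by left.
case: (eqVneq i l) => [->|Hil]; first by right.
by move: Hp; rewrite Hg0 // LL.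
Qed.

Lemma g_pos_R i k l : H k l -> (0 < g k l (R i))%N -> False.
Proof. by move=> Hkl; rewrite Hg0 // RL. Qed.

Lemma gen_R p i : gen p -> (0 < p (R i))%N -> p = h i.
Proof.
move=> /Hgen [[k ->]|[k [l [Hkl ->]]]] Hp; first by rewrite (h_pos_R Hp).
by case: (g_pos_R Hkl Hp).
Qed.

Lemma gen_L p i : gen p -> (0 < p (L i))%N -> p = h i \/ exists j, H i j /\ p = g i j.
Proof.
move=> /Hgen [[k ->]|[k [l [Hkl ->]]]] Hp; first by left; rewrite (h_pos_L Hp).
right; case: (g_pos_L Hkl Hp) => ->; first by exists l.
by exists k; rewrite HHsym Hgsym.
Qed.

Lemma gen_Lle p i : gen p -> (p (L i) <= h i (L i))%N.
Proof.
move=> Hp; case: (posnP (p (L i))) => [->//|Hpos].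
case: (gen_L Hp Hpos) => [->//|[j [Hij ->]]]; exact: gij_le.
Qed.

Lemma gen_Rle p i : gen p -> (p (R i) <= h i (R i))%N.
Proof.
move=> Hp; case: (posnP (p (R i))) => [->//|Hpos].
by rewrite (gen_R Hp Hpos).
Qed.

Lemma gen_two p j k : gen p -> (0 < p (L j))%N -> (0 < p (L k))%N -> j != k -> H j k.
Proof.
move=> /Hgen [[l ->]|[l [l' [Hll ->]]]] Hj Hk Hne.
  by move: Hne; have E1 := h_pos_L Hj; have E2 := h_pos_L Hk; rewrite -E1 -E2 eqxx.
move: Hne; case: (g_pos_L Hll Hj) => ->; case: (g_pos_L Hll Hk) => -> //; rewrite ?eqxx //.
by rewrite HHsym.
Qed.


Local Notation XX := 'X_{1..m+m}.
Definition fitC (C : pred 'I_(m+m)) (u : XX) :=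
  exists p q, [/\ gen p, gen q & forall v, C v -> (p v + q v <= u v)%N].
Definition M2g (u : XX) :=
  exists p q, [/\ gen p, gen q & forall v, (p v + q v <= u v)%N].

Lemma tight_pair (u p q : XX) x : ~ M2g u -> gen p -> gen q ->
  (forall v, p v + q v <= (u + U_(x))%MM v)%N ->
  (p x + q x = u x + 1)%N /\ (forall v, v != x -> p v + q v <= u v)%N.
Proof.
move=> Hn Gp Gq F.
have F' : forall v, v != x -> (p v + q v <= u v)%N.
  by move=> v Hv; move: (F v); rewrite mnmDE mnm1E eq_sym (negbTE Hv) addn0.
split=> //.
have Hx : (p x + q x <= u x + 1)%N by move: (F x); rewrite mnmDE mnm1E eqxx.
case: (ltnP (p x + q x) (u x + 1)) => Hlt; last by lia.
case: Hn; exists p, q; split=> // v; case: (eqVneq v x) => [->|]; [lia|exact: F'].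
Qed.

Lemma fit_g (u : XX) i j (q : XX) : H i j -> gen q ->
  (g i j (L i) + q (L i) <= u (L i))%N -> (g i j (L j) + q (L j) <= u (L j))%N ->
  (forall v, v != L i -> q v <= u v)%N -> M2g u.
Proof.
move=> Hij Gq H1 H2 H3; exists (g i j), q; split=> //; first exact: Hg.
move=> v; case: (eqVneq v (L i)) => [->//|Hvi]; case: (eqVneq v (L j)) => [->//|Hvj].
by rewrite Hg0 // add0n; apply: H3.
Qed.

Lemma corner_LR (u : XX) i : ~ M2g u -> M2g (u + U_(L i))%MM -> M2g (u + U_(R i))%MM -> False.
Proof.
move=> Hn [p1 [q1 [Gp1 Gq1 F1]]] [p2 [q2 [Gp2 Gq2 F2]]].
have [T1 F1'] := tight_pair Hn Gp1 Gq1 F1.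
have [T2 F2'] := tight_pair Hn Gp2 Gq2 F2.
clear F1 F2.
have HXY : L i != R i by rewrite LR.
have HYX : R i != L i by rewrite RL.
wlog Hp2 : p2 q2 Gp2 Gq2 T2 F2' / (0 < p2 (R i))%N.
  move=> W; case: (posnP (p2 (R i))) => Hp; last exact: (W p2 q2).
  apply: (W q2 p2) => //; first by rewrite addnC.
    by move=> v Hv; rewrite addnC; apply: F2'.
  by move: T2; rewrite Hp; lia.
have Ep2 := gen_R Gp2 Hp2; subst p2.
have Hc1 := gen_Lle i Gp1; have Hc2 := gen_Lle i Gq1.
case: (posnP (q2 (R i))) => Hq2Y; last first.
  have Eq2 := gen_R Gq2 Hq2Y; subst q2.
  have := F2' _ HXY; lia.
have HX := F2' _ HXY.
have Hq2 : forall v, v != L i -> (q2 v <= u v)%N.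
  move=> v Hv; case: (eqVneq v (R i)) => [->|HvY]; first by rewrite Hq2Y.
  by have := F2' _ HvY; lia.
have HY := F1' _ HYX.
have Hnh : forall p, gen p -> (p (R i) + 0 <= u (R i))%N -> (0 < p (L i))%N ->
    exists j, H i j /\ p = g i j.
  move=> p Gp Hp Hpos; case: (gen_L Gp Hpos) => [Ep|//].
  by move: Hp; rewrite Ep; lia.
have [Hp1X Hq1X] : (0 < p1 (L i))%N /\ (0 < q1 (L i))%N by lia.
have [j [Hij Ej]] := Hnh p1 Gp1 (ltac:(lia)) Hp1X.
have [k [Hik Ek]] := Hnh q1 Gq1 (ltac:(lia)) Hq1X.
subst p1 q1.
have Hji : L j != L i by rewrite LL; apply: contraTneq Hij => ->; rewrite HHirr.
have Hki : L k != L i by rewrite LL; apply: contraTneq Hik => ->; rewrite HHirr.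
case: (eqVneq j k) => [Ejk|Hjk].
  subst k; have Hj := F1' _ Hji.
  have Hq2j := gen_Lle j Gq2.
  case: (Hcond Hij) => [[Ta Tb]|[Wa Wb]]; last by lia.
  apply: Hn; apply: (fit_g Hij Gq2) => //; lia.
have Hkj : L k != L j by rewrite LL eq_sym.
have Hjk' : L j != L k by rewrite LL.
have Hj := F1' _ Hji; have Hk := F1' _ Hki.
rewrite (Hg0 Hik) // in Hj; rewrite (Hg0 Hij) // in Hk.
have Hq2jk : (q2 (L j) = 0)%N \/ (q2 (L k) = 0)%N.
  case: (posnP (q2 (L j))) => Hj0; first by left.
  case: (posnP (q2 (L k))) => Hk0; first by right.
  by case: (Htri Hij Hik (gen_two Gq2 Hj0 Hk0 Hjk)).
have Hai := gij_le Hij; have Hak := gij_le Hik.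
have tightcase : forall j k, H i j -> H i k ->
    (g i j (L i) = h i (L i) /\ g i j (L j) = h j (L j)) ->
    (g i j (L i) + g i k (L i) = u (L i) + 1)%N ->
    (g i j (L j) <= u (L j))%N -> (g i k (L k) <= u (L k))%N ->
    (q2 (L j) = 0)%N \/ (q2 (L k) = 0)%N -> M2g u.
  move=> j' k' Hij' Hik' [Ta Tb] T Hj' Hk' [Z|Z].
    apply: (fit_g Hij' Gq2) => //; first by rewrite Ta.
    by rewrite Z addn0.
  have Hak' := gij_le Hik'.
  apply: (fit_g Hik' Gq2) => //; last by rewrite Z addn0.
  by clear -T Ta HX Hak'; lia.
rewrite addn0 in Hj; rewrite add0n in Hk.
case: (Hcond Hij) => [Tj|[Wa Wb]].
  by apply: Hn; apply: (tightcase j k).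
case: (Hcond Hik) => [Tk|[Wa' Wb']]; last by clear -Wa Wa' T1 HX; lia.
apply: Hn; apply: (tightcase k j) => //; first by rewrite addnC.
by case: Hq2jk; [right|left].
Qed.


Definition CA (A : pred 'I_m) : pred 'I_(m+m) :=
  fun v => match split v with inl i => ~~ A i | inr i => A i end.
Lemma CA_L A i : CA A (L i) = ~~ A i.
Proof. have := unsplitK (inl i : 'I_m + 'I_m). rewrite /CA /= => ->. by []. Qed.
Lemma CA_R A i : CA A (R i) = A i.
Proof. have := unsplitK (inr i : 'I_m + 'I_m). rewrite /CA /= => ->. by []. Qed.

Definition indep (A : pred 'I_m) := forall i j, A i -> A j -> ~~ H i j.

Definition Bd := (\max_(i < m) maxn (h i (L i)) (h i (R i)))%N.
Lemma gen_bound p v : gen p -> (p v <= Bd)%N.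
Proof.
move=> Gp; case: (vsplit v) => [[i ->]|[i ->]].
- apply: leq_trans (gen_Lle i Gp) _; apply: leq_trans (leq_maxl _ (h i (R i))) _.
  rewrite /Bd; exact: (@leq_bigmax _ (fun i : 'I_m => maxn (h i (L i)) (h i (R i))) i).
- apply: leq_trans (gen_Rle i Gp) _; apply: leq_trans (leq_maxr (h i (L i)) _) _.
  rewrite /Bd; exact: (@leq_bigmax _ (fun i : 'I_m => maxn (h i (L i)) (h i (R i))) i).
Qed.

Local Notation N := (2 * Bd)%N.
Lemma gen2 p q v : gen p -> gen q -> (p v + q v <= N)%N.
Proof. by move=> Gp Gq; rewrite mul2n -addnn leq_add // gen_bound. Qed.
Definition dft (u : XX) := (\sum_v (N - u v))%N.

Lemma dft_lt (u : XX) v : (u v < N)%N -> (dft (u + U_(v))%MM < dft u)%N.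
Proof.
move=> Hv; rewrite /dft (bigD1 v) //= [X in (_ < X)%N](bigD1 v) //=.
rewrite mnmDE mnm1E eqxx.
have -> : (\sum_(i | i != v) (N - (u + U_(v))%MM i) = \sum_(i | i != v) (N - u i))%N.
  by apply: eq_bigr => w Hw; rewrite mnmDE mnm1E eq_sym (negbTE Hw) addn0.
rewrite ltn_add2r; lia.
Qed.

Lemma corner_case (u : XX) : (forall v, u v <= N)%N -> ~ M2g u ->
  (forall v, (u v < N)%N -> M2g (u + U_(v))%MM) ->
  exists A, indep A /\ ~ fitC (CA A) u.
Proof.
move=> Hu Hn Hcor; exists (fun i => u (L i) == N); split.
  move=> i j /eqP Hi /eqP Hj; apply/negP => Hij; apply: Hn.
  exists (g i j), (g i j); split; try exact: Hg.
  move=> v; case: (eqVneq v (L i)) => [->|Hvi]; first by rewrite Hi gen2 //; exact: Hg.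
  case: (eqVneq v (L j)) => [->|Hvj]; first by rewrite Hj gen2 //; exact: Hg.
  by rewrite Hg0.
move=> [p [q [Gp Gq F]]]; apply: (Hn); exists p, q; split=> // v.
case: (eqVneq (u v) N) => [->|HvN]; first by rewrite gen2.
have HvN' : (u v < N)%N by rewrite ltn_neqAle HvN Hu.
apply: F; case: (vsplit v) => [[i Ei]|[i Ei]]; subst v; rewrite ?CA_L ?CA_R //.
apply/eqP; apply: NNPP => HL.
have HL' : (u (L i) < N)%N by rewrite ltn_neqAle Hu andbT; apply/eqP.
exact: (corner_LR Hn (Hcor _ HL') (Hcor _ HvN')).
Qed.

Lemma defect d : forall u : XX, (forall v, u v <= N)%N -> (dft u <= d)%N -> ~ M2g u ->
  exists A, indep A /\ ~ fitC (CA A) u.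
Proof.
elim: d => [|d IH] u Hu Hd Hn;
  case: (classic (exists v, (u v < N)%N /\ ~ M2g (u + U_(v))%MM)) => [[v [Hv Hn2]]|Hc];
  try (apply: (corner_case Hu Hn) => v Hv; apply: NNPP => H2; apply: Hc; exists v; done).
  by have := dft_lt Hv; move: Hd; rewrite leqn0 => /eqP ->.
have Hd' : (dft (u + U_(v))%MM <= d)%N by rewrite -ltnS (leq_trans (dft_lt Hv)).
have Hu' : forall w, ((u + U_(v))%MM w <= N)%N.
  by move=> w; rewrite mnmDE mnm1E; case: (eqVneq v w) => [<-|]; rewrite ?addn0 ?addn1.
have [A [HA Hf]] := IH _ Hu' Hd' Hn2.
exists A; split=> //; move=> [p [q [Gp Gq F]]]; apply: Hf; exists p, q; split=> // w Cw.
by apply: leq_trans (F w Cw) _; rewrite mnmDE leq_addr.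
Qed.

Lemma comb_main (u : XX) : (forall A, indep A -> fitC (CA A) u) -> M2g u.
Proof.
move=> Hfit; apply: NNPP => Hn.
pose u' : XX := [multinom minn (u v) N | v < m + m].
have Hu' : forall v, (u' v <= N)%N by move=> v; rewrite mnmE geq_minr.
have Hn' : ~ M2g u'.
  move=> [p [q [Gp Gq F]]]; apply: (Hn); exists p, q; split=> // v.
  by apply: leq_trans (F v) _; rewrite mnmE geq_minl.
have [A [HA Hf]] := defect Hu' (leqnn _) Hn'.
apply: Hf; have [p [q [Gp Gq F]]] := Hfit A HA; exists p, q; split=> // v Cv.
by rewrite mnmE leq_min F //= gen2.
Qed.

End Comb.

End PartE.
Import PartE.

Module PartF.
Set Implicit Arguments.
Unset Strict Implicit.
Unset Printing Implicit Defensive.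
Import GRing.Theory.
Local Open Scope ring_scope.

Section Main.
Variables (K : fieldType) (m : nat) (H : rel 'I_m) (I : {mpoly K[(m + m)%N]} -> Prop).
Local Notation n := (m + m)%N.
Local Notation XX := 'X_{1..n}.
Local Notation L i := (lshift m i).
Local Notation R i := (rshift m i).
Hypothesis HHs : is_simple_graph H.
Hypothesis Hs2 : is_support2 I.
Hypothesis Hedge : forall u v : 'I_n, GI_edge I u v <-> whisker_edge H u v.
Hypothesis Htf : GI_triangle_free I.
Hypothesis Hal : alpha_le1 I.

Lemma supp_pair (mm : XX) u v w : Defs.msupp mm = [set u; v] ->
  (mm w != 0%N) = (w == u) || (w == v).
Proof. by move=> E; have := congr1 (fun S : {set 'I_n} => w \in S) E; rewrite /= in_set in_set2. Qed.

Lemma h_ex i : exists mm, mingen I mm /\ Defs.msupp mm = [set L i; R i].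
Proof.
have : whisker_edge H (L i) (R i) by right; exists i; left.
by move/Hedge => [_ [mm [Hm Hs]]]; exists mm.
Qed.

Lemma g_ex i j : exists mm, H i j -> mingen I mm /\ Defs.msupp mm = [set L i; L j].
Proof.
case: (boolP (H i j)) => Hij; last by exists 0%MM.
have : whisker_edge H (L i) (L j) by left; exists i, j.
by move/Hedge => [_ [mm [Hm Hs]]]; exists mm.
Qed.

Variables (h : 'I_m -> XX) (g : 'I_m -> 'I_m -> XX).
Hypothesis Hhs : forall i, mingen I (h i) /\ Defs.msupp (h i) = [set L i; R i].
Hypothesis Hgs : forall i j, H i j -> mingen I (g i j) /\ Defs.msupp (g i j) = [set L i; L j].

Lemma HHsym : ssrbool.symmetric H. Proof. by case: HHs. Qed.
Lemma HHirr : irreflexive H. Proof. by case: HHs. Qed.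

Lemma Htri i j k : H i j -> H i k -> H j k -> False.
Proof.
move=> Hij Hik Hjk; apply: (Htf (u := L i) (v := L j) (w := L k)); split; apply/Hedge; left.
- by exists i, j.
- by exists j, k.
- by exists i, k.
Qed.

Lemma Hgsym i j : H i j -> g i j = g j i.
Proof.
move=> Hij; have Hji : H j i by rewrite HHsym.
have [G1 S1] := Hgs Hij; have [G2 S2] := Hgs Hji.
apply: (Hal G1 G2 S1); by rewrite S2 setUC.
Qed.

Lemma Hgen p : mingen I p -> (exists i, p = h i) \/ (exists i j, H i j /\ p = g i j).
Proof.
move=> Hp; have [u [v [Huv Hs]]] := Hs2.2 p Hp.
have : GI_edge I u v by split=> //; exists p.
move/Hedge => [[i [j [Eu Ev Hij]]]|[i [[Eu Ev]|[Eu Ev]]]]; subst u v.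
- right; exists i, j; split=> //; have [G S] := Hgs Hij; exact: Hal Hp G Hs S.
- left; exists i; have [G S] := Hhs i; exact: Hal Hp G Hs S.
- left; exists i; have [G S] := Hhs i; apply: Hal Hp G Hs _; by rewrite S setUC.
Qed.

Lemma Hh0 i v : v != L i -> v != R i -> h i v = 0%N.
Proof.
move=> H1 H2; apply/eqP; apply: contraT; rewrite (supp_pair _ (Hhs i).2).
by rewrite (negbTE H1) (negbTE H2).
Qed.

Lemma HhR i : (0 < h i (R i))%N.
Proof. by rewrite lt0n (supp_pair _ (Hhs i).2) eqxx orbT. Qed.
Lemma HhL i : (0 < h i (L i))%N.
Proof. by rewrite lt0n (supp_pair _ (Hhs i).2) eqxx. Qed.

Lemma Hg0 i j v : H i j -> v != L i -> v != L j -> g i j v = 0%N.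
Proof.
move=> Hij H1 H2; apply/eqP; apply: contraT; rewrite (supp_pair _ (Hgs Hij).2).
by rewrite (negbTE H1) (negbTE H2).
Qed.

Lemma HgL i j : H i j -> (0 < g i j (L i))%N.
Proof. by move=> Hij; rewrite lt0n (supp_pair _ (Hgs Hij).2) eqxx. Qed.
Lemma HgL' i j : H i j -> (0 < g i j (L j))%N.
Proof. by move=> Hij; rewrite lt0n (supp_pair _ (Hgs Hij).2) eqxx orbT. Qed.

Lemma Hh i : mingen I (h i). Proof. exact: (Hhs i).1. Qed.
Lemma Hg i j : H i j -> mingen I (g i j). Proof. by move=> Hij; exact: (Hgs Hij).1. Qed.


Lemma HmI : is_monomial_ideal I. Proof. exact: Hs2.1. Qed.
Lemma HI : is_ideal I. Proof. exact: HmI.1. Qed.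

Lemma cdeg_pos (C : pred 'I_n) (u : XX) v : C v -> (0 < u v)%N -> cdeg C u != 0%N.
Proof.
move=> Cv Hu; rewrite -lt0n /cdeg (bigD1 v) //=.
exact: leq_trans Hu (leq_addr _ _).
Qed.

Lemma PC_X (C : pred 'I_n) v : PC C ('X_v : {mpoly K[n]}) -> C v.
Proof.
move=> /(_ U_(v)%MM); rewrite msuppX inE eqxx => /(_ isT).
apply: contraR => Cv; apply/eqP; rewrite /cdeg big1 // => i Ci.
rewrite mnm1E; case: eqP => // E; by move: Cv; rewrite E Ci.
Qed.

Lemma edge_prime (Q : {mpoly K[n]} -> Prop) mm x y : is_prime_ideal Q -> ideal_sub I Q ->
  mingen I mm -> Defs.msupp mm = [set x; y] -> Q 'X_x \/ Q 'X_y.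
Proof.
move=> HQ HIQ [Hmm _] Hs; apply: NNPP => Hn.
have : ~ Q 'X_[mm].
  apply: notP_X => // v; rewrite lt0n (supp_pair _ Hs) => /orP [/eqP -> H1|/eqP -> H1].
    by apply: Hn; left.
  by apply: Hn; right.
by apply; apply: HIQ.
Qed.

Lemma gen_cover (A : pred 'I_m) mm : indep H A -> mingen I mm ->
  exists2 v, CA A v & (0 < mm v)%N.
Proof.
move=> HA Hmm; case: (Hgen Hmm) => [[i ->]|[i [j [Hij ->]]]].
  case: (boolP (A i)) => Ai.
    by exists (R i); rewrite ?CA_R ?HhR.
  by exists (L i); rewrite ?CA_L ?Ai ?HhL.
case: (boolP (A i)) => Ai; last by exists (L i); rewrite ?CA_L ?Ai ?HgL.
case: (boolP (A j)) => Aj; first by move: (HA _ _ Ai Aj); rewrite Hij.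
by exists (L j); rewrite ?CA_L ?Aj ?HgL'.
Qed.

Lemma PCA_min (A : pred 'I_m) : indep H A -> is_min_prime I (PC (K := K) (CA A)).
Proof.
move=> HA; split; first exact: PC_prime.
- move=> f /(monoE HmI) Hf u /Hf /mingen_exists [mm [Hmm Hle]].
  have [v Cv Hv] := gen_cover HA Hmm.
  apply: (cdeg_pos Cv); apply: leq_trans Hv _; by move/mnm_lepP: Hle.
- move=> Q HQ HIQ HQP; apply: PC_sub; first by case: HQ.
  move=> v; case: (vsplit v) => [[i ->]|[i ->]]; rewrite ?CA_L ?CA_R => Ci.
    have [Hm Hs] := Hhs i; case: (edge_prime HQ HIQ Hm Hs) => // /HQP /PC_X.
    by rewrite CA_R; move/negbTE: Ci => ->.
  have [Hm Hs] := Hhs i; case: (edge_prime HQ HIQ Hm Hs) => // /HQP /PC_X.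
  by rewrite CA_L Ci.
Qed.

Lemma dir21 (Hcond : forall i j, H i j ->
  (g i j (L i) = h i (L i) /\ g i j (L j) = h j (L j)) \/
  (2 * g i j (L i) <= h i (L i) /\ 2 * g i j (L j) <= h j (L j))%N) :
  ideal_eq (symb_sq I) (ideal_mul I I).
Proof.
move=> f; split; last first.
  move=> Hf P [[HP HP1 _] _ _]; exists 1; split=> //; by rewrite mul1r.
move=> Hsymb; apply/(sqE HmI) => u Hu.
have : M2g (mingen I) u.
  apply: (comb_main HHsym HHirr Htri Hg Hgsym Hgen Hh0 Hg0 Hcond) => A HA.
  have [s [Hs Hsf]] := Hsymb _ (PCA_min HA).
  have Ht : exists t, t \in msupp s /\ cdeg (CA A) t = 0%N.
    apply: NNPP => Hn; apply: Hs => t Ht; apply/eqP => E; apply: Hn; by exists t.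
  apply: NNPP => Hnf.
  have Hup : upward (fitC (mingen I) (CA A)).
    move=> a b [p [q [Gp Gq F]]]; exists p, q; split=> // v Cv.
    by apply: leq_trans (F v Cv) _; rewrite mnmDE leq_addr.
  have HCd : forall t a, cdeg (CA A) t = 0%N -> fitC (mingen I) (CA A) (t + a)%MM ->
      fitC (mingen I) (CA A) a.
    move=> t a /eqP; rewrite cdeg0P => /forall_inP Ht0 [p [q [Gp Gq F]]].
    exists p, q; split=> // v Cv; move: (F v Cv); by rewrite mnmDE (eqP (Ht0 v Cv)).
  have [w [Hw Hnw]] := key Hup HCd Ht (ex_intro _ u (conj Hu Hnf)).
  apply: Hnw; have [p [q [Gp Gq Hl]]] := (sqE HmI _).1 Hsf w Hw.
  exists p, q; split=> // v _; move/mnm_lepP: Hl => /(_ v); by rewrite mnmDE.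
move=> [p [q [Gp Gq F]]]; exists p, q; split=> //.
by apply/mnm_lepP => v; rewrite mnmDE.
Qed.

Lemma hE i v : h i v = if v == L i then h i (L i) else if v == R i then h i (R i) else 0%N.
Proof.
case: (eqVneq v (L i)) => [->//|H1]; case: (eqVneq v (R i)) => [->//|H2]; exact: Hh0.
Qed.

Lemma gE i j v : H i j ->
  g i j v = if v == L i then g i j (L i) else if v == L j then g i j (L j) else 0%N.
Proof.
move=> Hij; case: (eqVneq v (L i)) => [->//|H1]; case: (eqVneq v (L j)) => [->//|H2].
exact: Hg0.
Qed.

Lemma minP_edge (P : {mpoly K[n]} -> Prop) mm x y : is_min_prime I P ->
  mingen I mm -> Defs.msupp mm = [set x; y] -> P 'X_x \/ P 'X_y.
Proof. by move=> [HP HIP _]; apply: edge_prime. Qed.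

Lemma minP_LR (P : {mpoly K[n]} -> Prop) k : is_min_prime I P -> P 'X_(L k) -> ~ P 'X_(R k).
Proof.
move=> HPm HLk HRk; have [HP HIP Hmin] := HPm.
pose C := fun v => asb (P 'X_v) && (v != R k).
have HQ := PC_prime K C.
have HIQ : ideal_sub I (PC C).
  move=> f /(monoE HmI) Hf u /Hf /mingen_exists [mm [Hmm Hle]].
  suff [v Cv Hv] : exists2 v, C v & (0 < mm v)%N.
    apply: (cdeg_pos Cv); apply: leq_trans Hv _; by move/mnm_lepP: Hle.
  case: (Hgen Hmm) => [[l ->]|[l [l' [Hll ->]]]].
    have [Hm Hs] := Hhs l; case: (minP_edge HPm Hm Hs) => HP1.
      by exists (L l); rewrite ?HhL // /C LR andbT; apply/asbP.
    case: (eqVneq l k) => [E|Hlk].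
      by subst l; exists (L k); rewrite ?HhL // /C LR andbT; apply/asbP.
    by exists (R l); rewrite ?HhR // /C RR Hlk andbT; apply/asbP.
  have [Hm Hs] := Hgs Hll; case: (minP_edge HPm Hm Hs) => HP1.
    by exists (L l); rewrite ?HgL // /C LR andbT; apply/asbP.
  by exists (L l'); rewrite ?HgL' // /C LR andbT; apply/asbP.
have HQP : ideal_sub (PC C) P.
  by apply: PC_sub; [case: HP|move=> v /andP [/asbP]].
have := Hmin _ HQ HIQ HQP _ HRk; move/PC_X; by rewrite /C eqxx andbF.
Qed.

Lemma witness_contra (Heq : ideal_eq (symb_sq I) (ideal_mul I I)) (u : XX) :
  (forall P, is_min_prime I P -> exists p q, [/\ mingen I p, mingen I q &
     forall v, P 'X_v -> (p v + q v <= u v)%N]) ->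
  M2 I u.
Proof.
move=> Hw.
have : symb_sq I 'X_[u].
  move=> P HPm; have [p [q [Gp Gq F]]] := Hw P HPm.
  apply: (loc_M2 HI _ Gp Gq F); by case: HPm.
move/Heq/(sqE HmI) => /(_ u); apply; by rewrite msuppX inE.
Qed.

Ltac ifs H0 := rewrite ?eqxx; repeat (match goal with |- context [ (?x == ?y) ] =>
  case: (x =P y) => [?|?]; [subst; rewrite ?eqxx|]; try (by rewrite eqxx in H0) end).

Lemma class1 (u : XX) i j p : H i j -> mingen I p -> (forall v, p v <= u v)%N ->
  (forall k, 0 < u (R k) -> k = j)%N -> (forall k, 0 < u (L k) -> k = i \/ k = j)%N ->
  p = h j \/ p = g i j.
Proof.
move=> Hij Gp Hle HR HL; case: (Hgen Gp) => [[k Ek]|[k [l [Hkl Ek]]]]; subst p.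
  by left; rewrite (HR k) //; apply: leq_trans (HhR k) (Hle _).
right; have Hk := HL k (leq_trans (HgL Hkl) (Hle _)).
have Hl := HL l (leq_trans (HgL' Hkl) (Hle _)).
case: Hk => Ek; case: Hl => El; subst k l => //.
- by move: Hkl; rewrite HHirr.
- by rewrite Hgsym.
- by move: Hkl; rewrite HHirr.
Qed.

Lemma caseA (Heq : ideal_eq (symb_sq I) (ideal_mul I I)) i j : H i j ->
  (h i (L i) < 2 * g i j (L i))%N -> (g i j (L j) < h j (L j))%N -> False.
Proof.
move=> Hij H1 H2.
have Hij' : i != j by apply: contraTneq Hij => ->; rewrite HHirr.
pose u : XX := [multinom (if v == L i then h i (L i) else if v == L j then
   maxn (h j (L j)) (2 * g i j (L j)) else if v == R j then h j (R j) else 0)%N | v < n].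
have Hu : M2 I u.
  apply: (witness_contra Heq) => P HPm.
  case: (classic (P 'X_(L i))) => HPi.
    exists (h i), (h j); split; [exact: Hh|exact: Hh|].
    move=> v HPv; rewrite mnmE (hE i v) (hE j v).
    case: (vsplit v) => [[k Ek]|[k Ek]]; subst v; rewrite ?LL ?LR ?RL ?RR; ifs Hij';
      try (exfalso; exact: (minP_LR HPm HPi HPv)); lia.
  exists (g i j), (g i j); split; [exact: Hg|exact: Hg|].
  move=> v HPv; rewrite mnmE (gE v Hij).
  case: (vsplit v) => [[k Ek]|[k Ek]]; subst v; rewrite ?LL ?LR ?RL ?RR; ifs Hij';
    try (exfalso; exact: HPi HPv); lia.
move: Hu => [p [q [Gp Gq /mnm_lepP Hl]]].
have Hb : forall v, (p v + q v <= u v)%N by move=> v; move: (Hl v); rewrite mnmDE.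
have HR : forall k, (0 < u (R k))%N -> k = j.
  by move=> k; rewrite mnmE ?RL ?RR; case: eqP.
have HL : forall k, (0 < u (L k))%N -> k = i \/ k = j.
  by move=> k; rewrite mnmE ?LL ?LR; case: eqP => [->|_]; [left|case: eqP => [->|//]; right].
have Cp := class1 Hij Gp (fun v => leq_trans (leq_addr _ _) (Hb v)) HR HL.
have Cq := class1 Hij Gq (fun v => leq_trans (leq_addl _ _) (Hb v)) HR HL.
have HRj := Hb (R j); have HLj := Hb (L j); have HLi := Hb (L i).
have Hji' : j != i by rewrite eq_sym.
rewrite !mnmE ?RL ?RR ?LR ?LL ?eqxx ?(negbTE Hij') ?(negbTE Hji') /= in HRj HLj HLi.
have P1 := HhR j; have P2 := HgL' Hij.
by case: Cp => Ep; case: Cq => Eq; subst p q; lia.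
Qed.

Lemma caseC (Heq : ideal_eq (symb_sq I) (ideal_mul I I)) i j : H i j ->
  (h i (L i) <= g i j (L i))%N -> (h j (L j) <= g i j (L j))%N ->
  ~ (h i (L i) = g i j (L i) /\ h j (L j) = g i j (L j)) -> False.
Proof.
move=> Hij H1 H2 H3.
have Hij' : i != j by apply: contraTneq Hij => ->; rewrite HHirr.
pose u : XX := [multinom (if v == L i then 2 * h i (L i) else if v == L j then
   2 * h j (L j) else 0)%N | v < n].
have Hu : M2 I u.
  apply: (witness_contra Heq) => P HPm.
  case: (classic (P 'X_(L i))) => HPi.
    exists (h i), (h i); split; [exact: Hh|exact: Hh|].
    move=> v HPv; rewrite mnmE (hE i v).
    case: (vsplit v) => [[k Ek]|[k Ek]]; subst v; rewrite ?LL ?LR ?RL ?RR; ifs Hij';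
      try (exfalso; exact: (minP_LR HPm HPi HPv)); lia.
  have HPj : P 'X_(L j).
    have [Gm Sm] := Hgs Hij; by case: (minP_edge HPm Gm Sm).
  exists (h j), (h j); split; [exact: Hh|exact: Hh|].
  move=> v HPv; rewrite mnmE (hE j v).
  case: (vsplit v) => [[k Ek]|[k Ek]]; subst v; rewrite ?LL ?LR ?RL ?RR; ifs Hij';
    try (exfalso; exact: (minP_LR HPm HPj HPv)); try (exfalso; exact: HPi HPv); lia.
move: Hu => [p [q [Gp Gq /mnm_lepP Hl]]].
have Hb : forall v, (p v + q v <= u v)%N by move=> v; move: (Hl v); rewrite mnmDE.
have HR : forall k, (0 < u (R k))%N -> k = j.
  by move=> k; rewrite mnmE ?RL ?RR.
have HL : forall k, (0 < u (L k))%N -> k = i \/ k = j.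
  by move=> k; rewrite mnmE ?LL ?LR; case: eqP => [->|_]; [left|case: eqP => [->|//]; right].
have Cp := class1 Hij Gp (fun v => leq_trans (leq_addr _ _) (Hb v)) HR HL.
have Cq := class1 Hij Gq (fun v => leq_trans (leq_addl _ _) (Hb v)) HR HL.
have HRj := Hb (R j); have HLj := Hb (L j); have HLi := Hb (L i).
have Hji' : j != i by rewrite eq_sym.
rewrite !mnmE ?RL ?RR ?LR ?LL ?eqxx ?(negbTE Hij') ?(negbTE Hji') /= in HRj HLj HLi.
have P1 := HhR j.
by case: Cp => Ep; case: Cq => Eq; subst p q; lia.
Qed.

End Main.

End PartF.
Import PartF.

Unset Implicit Arguments.

Theorem theorem3p8 (K : fieldType) (m : nat) (H : rel 'I_m)
  (I : {mpoly K[m + m]} -> Prop) :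
  is_simple_graph H ->
  is_support2 I ->
  (forall u v : 'I_(m + m), GI_edge I u v <-> whisker_edge H u v) ->
  no_embedded_primes I ->
  GI_triangle_free I ->
  alpha_le1 I ->
  (ideal_eq (symb_sq I) (ideal_mul I I) <->
   (forall i j : 'I_m, H i j ->
      forall a b c c' d d' : nat,
        w_is I (lshift m i) (lshift m j) a b ->
        w_is I (lshift m i) (rshift m i) c c' ->
        w_is I (lshift m j) (rshift m j) d d' ->
        (c = a /\ d = b) \/ (2 * a <= c /\ 2 * b <= d)%N)).
Proof.
move=> HHs Hs2 Hedge _ Htf Hal.
have [h Hhs] := fin_all_exists (h_ex Hedge).
have [g Hgs] : exists g : 'I_m -> 'I_m -> 'X_{1..m+m}, forall i j, H i j ->
    mingen I (g i j) /\ Defs.msupp (g i j) = [set lshift m i; lshift m j].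
  have Hx : forall i, exists gi : 'I_m -> 'X_{1..m+m}, forall j, H i j ->
      mingen I (gi j) /\ Defs.msupp (gi j) = [set lshift m i; lshift m j].
    by move=> i; exact: (fin_all_exists (fun j => g_ex Hedge i j)).
  by have [g Hg] := fin_all_exists Hx; exists g.
split.
- move=> Heq i j Hij a b c c' d d' [m1 [G1 S1 E1 E1']] [m2 [G2 S2 E2 E2']] [m3 [G3 S3 E3 E3']].
  have Eg : m1 = g i j by have [G S] := Hgs i j Hij; exact: Hal G1 G S1 S.
  have Ehi : m2 = h i by have [G S] := Hhs i; exact: Hal G2 G S2 S.
  have Ehj : m3 = h j by have [G S] := Hhs j; exact: Hal G3 G S3 S.
  subst m1 m2 m3; subst a b c d.
  have Hji : H j i by rewrite (HHsym HHs).
  have Egs := Hgsym HHs Hal Hgs Hij.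
  have A1 := caseA HHs Hs2 Hedge Hal Hhs Hgs Heq Hij.
  have A2 := caseA HHs Hs2 Hedge Hal Hhs Hgs Heq Hji.
  have A3 := caseC HHs Hs2 Hedge Hal Hhs Hgs Heq Hij.
  rewrite -Egs in A2.
  have P1 := HgL Hgs Hij; have P2 := HgL' Hgs Hij.
  clear -A1 A2 A3 P1 P2; lia.
- move=> Hc; apply: (dir21 HHs Hs2 Hedge Htf Hal Hhs Hgs) => i j Hij.
  have [G1 S1] := Hgs i j Hij; have [G2 S2] := Hhs i; have [G3 S3] := Hhs j.
  have := Hc i j Hij _ _ _ _ _ _ (ex_intro _ _ (And4 G1 S1 erefl erefl))
    (ex_intro _ _ (And4 G2 S2 erefl erefl)) (ex_intro _ _ (And4 G3 S3 erefl erefl)).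
  by case=> [[-> ->]|]; [left|right].
Qed.
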